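(* Every semi-complete digraph with $n$ vertices that has a feedback arc set of size at most $k$ has at most $A\cdot\exp(C\sqrt{2k})\cdot(n+1)$ $k$-cuts, where $C=\pi\sqrt{2/3}$ and $A$ is a constant such that $p(m)\le\frac{A}{m+1}\exp(C\sqrt{m})$ for all integers $m\ge0$.
   Context: A simple digraph (no loops, no multiple arcs) $T$ is semi-complete if for every pair of distinct vertices $v,w$ at least one of $(v,w),(w,v)$ is an arc. A feedback arc set is a set $F\subseteq E(T)$ with $T\setminus F$ acyclic. A $k$-cut of a digraph $T$ is an ordered partition $(X,Y)$ of $V(T)$ (either part may be empty) such that there are at most $k$ arcs $(u,v)\in E(T)$ with $u\in Y$ and $v\in X$. $p(m)$ denotes the number of partitions of the integer $m$ (multisets of positive integers summing to $m$); such a constant $A$ exists by the Hardy–Ramanujan estimate. *)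

(* Defs.v *)
From mathcomp Require Import all_boot.
From Stdlib Require Import Reals.
Set Implicit Arguments. Unset Strict Implicit. Unset Printing Implicit Defensive.

(* A digraph on a finite vertex type T is given by its arc relation E : rel T
   (a relation automatically excludes multiple arcs). *)

Definition loopless (T : finType) (E : rel T) : Prop := forall v, ~~ E v v.

Definition semicomplete (T : finType) (E : rel T) : Prop :=
  loopless E /\ forall v w : T, v != w -> E v w || E w v.

Definition acyclic (T : finType) (E : rel T) : Prop :=
  forall (x : T) (p : seq T), path E x p -> last x p = x -> p = [::].

Definition remove_arcs (T : finType) (E : rel T) (F : {set T * T}) : rel T :=
  fun x y => E x y && ((x, y) \notin F).

Definition feedback_arc_set (T : finType) (E : rel T) (F : {set T * T}) : Prop :=
  (forall a, a \in F -> E a.1 a.2) /\ acyclic (remove_arcs E F).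

Definition back_arcs (T : finType) (E : rel T) (X Y : {set T}) : nat :=
  #|[set a : T * T | [&& E a.1 a.2, a.1 \in Y & a.2 \in X]]|.

(* k-cuts: ordered partitions (X, Y) of V(T); such a partition is determined
   by X, with Y = ~: X. *)
Definition kcuts (T : finType) (E : rel T) (k : nat) : {set {set T}} :=
  [set X : {set T} | back_arcs E X (~: X) <= k].

(* p(m): number of partitions of m, i.e. multisets of positive integers summing
   to m, encoded by multiplicity functions f (f i = number of parts equal to i,
   for 1 <= i <= m; every multiplicity is <= m), with f 0 = 0. *)
Definition npartitions (m : nat) : nat :=
  #|[set f : {ffun 'I_m.+1 -> 'I_m.+1} |
      (nat_of_ord (f ord0) == 0) && (\sum_(i < m.+1) i * f i == m)]|.

Definition Cconst : R := (PI * sqrt (2 / 3))%R.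

(* Main.v *)
Require Import Defs.
From mathcomp Require Import all_boot.
From mathcomp Require Import zify.
From Stdlib Require Import Reals Classical Lra.
Set Implicit Arguments. Unset Strict Implicit. Unset Printing Implicit Defensive.

Section Seqs.
Variable T : finType.
Implicit Types (X Y : {set T}) (s : seq T).

Definition cafter X s v := count (mem X) (drop (index v s).+1 s).
Definition G X s i := count (fun v => (v \notin X) && (cafter X s v == i)) s.
Fixpoint ninv X s := if s is u :: s' then ninv X s' + (if u \in X then 0 else count (mem X) s') else 0.

Lemma G_cons X u s i : u \notin s ->
  G X (u :: s) i = ((u \notin X) && (count (mem X) s == i)) + G X s i.
Proof.
move=> us; rewrite /G /= /cafter /= eqxx /= drop0; congr (_ + _).
apply: eq_in_count => v vs /=.
have -> : (u == v) = false by apply/eqP => e; rewrite e vs in us.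
by [].
Qed.

Lemma G_nil X i : G X [::] i = 0. Proof. by []. Qed.

Lemma G_bound X s i : uniq s -> count (mem X) s < i -> G X s i = 0.
Proof.
elim: s => [|u s IH] //= /andP [us us'] lt.
rewrite G_cons // IH //; last by move: lt; case: (u \in X) => /=; lia.
have : (count (mem X) s == i) = false by apply/eqP; move: lt; case: (u \in X)=>/=; lia.
by move=> ->; rewrite andbF.
Qed.

Lemma G_inj s X Y : uniq s -> count (mem X) s = count (mem Y) s ->
  (forall i, G X s i = G Y s i) -> forall v, v \in s -> (v \in X) = (v \in Y).
Proof.
elim: s => [|u s IH] //= /andP [us us'] hc hG.
have hG' i := hG i; move: hG'.
have key : forall i, (G X s i = G Y s i) -> forall v, v \in u :: s -> v \in X = (v \in Y) ->
   True by [].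
case uX: (u \in X); case uY: (u \in Y); move: hc => /=; rewrite ?uX ?uY /= => hc hG'.
- have e : forall i, G X s i = G Y s i by move=> i; have := hG' i; rewrite !G_cons // uX uY.
  move=> v; rewrite inE => /orP [/eqP -> |]; first by rewrite uX uY.
  by apply: IH => //; lia.
- exfalso; have := hG' (count (mem Y) s); rewrite !G_cons // uX uY /= eqxx.
  rewrite G_bound //; lia.
- exfalso; have := hG' (count (mem X) s); rewrite !G_cons // uX uY /= eqxx.
  rewrite (G_bound (X := Y)) //; lia.
- have hc' : count (mem X) s = count (mem Y) s by lia.
  have e : forall i, G X s i = G Y s i.
    by move=> i; have := hG' i; rewrite !G_cons // uX uY /= hc'; lia.
  move=> v; rewrite inE => /orP [/eqP -> |]; first by rewrite uX uY.
  by apply: IH.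
Qed.

Lemma sum_eq1 (c N : nat) : \sum_(i < N) (c == i : nat) = (c < N).
Proof.
elim: N => [|N IH]; first by rewrite big_ord0.
rewrite big_ord_recr /= IH ltnS leq_eqVlt; case: (ltngtP c N) => //=; lia.
Qed.

Lemma sum_eq1w (c N : nat) : \sum_(i < N) i * (c == i : nat) = (c < N) * c.
Proof.
elim: N => [|N IH]; first by rewrite big_ord0.
rewrite big_ord_recr /= IH ltnS leq_eqVlt; case: (ltngtP c N) => //=; lia.
Qed.

Lemma G_sum X s N : uniq s -> count (mem X) s < N ->
  \sum_(i < N) G X s i = count (predC (mem X)) s.
Proof.
elim: s => [|u s IH] /=; first by rewrite big1.
move=> /andP [us us'] lt.
under eq_bigr => i _ do rewrite G_cons //.
rewrite big_split /= IH //; last by move: lt; case: (u \in X) => /=; lia.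
case uX: (u \in X) => /=; first by rewrite big1 // add0n.
rewrite sum_eq1; move: lt; rewrite uX /= => ->.
by congr (_ + _); apply: eq_count. Qed.

Lemma G_wsum X s N : uniq s -> count (mem X) s < N ->
  \sum_(i < N) i * G X s i = ninv X s.
Proof.
elim: s => [|u s IH] /=; first by rewrite big1 // => i _; rewrite muln0.
move=> /andP [us us'] lt.
under eq_bigr => i _ do rewrite G_cons // mulnDr.
rewrite big_split /= IH //; last by move: lt; case: (u \in X) => /=; lia.
case uX: (u \in X) => /=; first by rewrite big1 ?add0n ?addn0 // => i _; rewrite muln0.
rewrite sum_eq1w; move: lt; rewrite uX /= => ->; lia.
Qed.

End Seqs.

Section Topo.
Variable T : finType.
Variable E' : rel T.
Hypothesis acy : acyclic E'.

Fixpoint walk (p : T -> T) (m : nat) (y : T) : seq T :=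
  if m is m'.+1 then rcons (walk p m' (p y)) y else [::].

Lemma walkP (S : {set T}) (p : T -> T) :
  (forall y, y \in S -> p y \in S /\ E' (p y) y) ->
  forall m y, y \in S -> path E' (iter m p y) (walk p m y) /\ last (iter m p y) (walk p m y) = y.
Proof.
move=> hp; elim=> [|m IH] y yS; first by split.
have [pS e] := hp y yS.
have [h1 h2] := IH (p y) pS.
rewrite [walk _ _ _]/= iterSr rcons_path last_rcons h1 h2 /=; split; [exact: e | by []].
Qed.

Lemma source (S : {set T}) : S != set0 ->
  exists2 v, v \in S & forall w, w \in S -> ~~ E' w v.
Proof.
move=> /set0Pn [x0 x0S].
apply: NNPP => hn.
have hall : forall v, v \in S -> exists w, (w \in S) && E' w v.
  move=> v vS; apply: NNPP => hw; apply: hn; exists v => // w wS; apply/negP => e.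
  by apply: hw; exists w; rewrite wS.
pose p v := if [pick w | (w \in S) && E' w v] is Some w then w else v.
have hp : forall y, y \in S -> p y \in S /\ E' (p y) y.
  move=> y yS; rewrite /p; case: pickP => [w /andP [] //|/= h].
  have [w hw] := hall y yS; by rewrite h in hw.
have iS : forall i y, y \in S -> iter i p y \in S.
  by elim=> [|i IH] y yS //=; have [] := hp _ (IH y yS).
pose f (i : 'I_#|T|.+1) := iter i p x0.
have ninj : ~ injective f.
  move=> inj; have := leq_card f inj; rewrite card_ord; lia.
have [i [j [fij nij]]] : exists i j, f i = f j /\ i <> j.
  apply: NNPP => h; apply: ninj => i j e; apply: NNPP => ne; apply: h; by exists i, j.
wlog lt : i j fij nij / i < j.
  move=> W; case: (ltngtP i j) => c; first exact: (W i j fij nij c).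
  - by apply: (W j i (esym fij)) => // e; apply: nij.
  - by exfalso; apply: nij; apply: val_inj.
pose y := iter i p x0.
have yS : y \in S by apply: iS.
have cyc : iter (j - i) p y = y.
  by rewrite /y -iterD subnK ?(ltnW lt) //; symmetry; exact: fij.
have [h1 h2] := walkP hp (j - i) yS.
rewrite cyc in h1 h2.
have := acy h1 h2.
have : 0 < j - i by rewrite subn_gt0.
case: (j - i) => [|m] //= _.
by case: (walk p m (p y)).
Qed.

Fixpoint topo (s : seq T) : bool :=
  if s is u :: s' then all (fun w => ~~ E' w u) s' && topo s' else true.

Fixpoint tsort (fuel : nat) (S : {set T}) : seq T :=
  if fuel is f.+1 then
    if [pick v in S | [forall w in S, ~~ E' w v]] is Some v then v :: tsort f (S :\ v)
    else [::]
  else [::].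

Lemma tsortP fuel (S : {set T}) : #|S| <= fuel ->
  [/\ uniq (tsort fuel S), topo (tsort fuel S) & forall v, (v \in tsort fuel S) = (v \in S)].
Proof.
elim: fuel S => [|f IH] S hS /=.
  split=> // v; move: hS; rewrite leqn0 cards_eq0 => /eqP ->; by rewrite inE.
case: pickP => [v /andP [vS /forallP src] | none].
  have hS' : #|S :\ v| <= f by move: hS; rewrite (cardsD1 v S) vS; lia.
  have [u1 t1 m1] := IH _ hS'.
  split.
  - by rewrite /= u1 m1 !inE eqxx.
  - rewrite /= t1 andbT; apply/allP => w; rewrite m1 !inE => /andP [_ wS].
    by have := src w; rewrite wS.
  - by move=> w; rewrite inE m1 !inE; case: eqP => [->|].
have S0 : S = set0.
  apply/eqP; apply: contraT => ne; have [v vS src] := source ne.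
  have := none v; rewrite vS /=.
  suff -> : [forall w in S, ~~ E' w v] by [].
  apply/forallP => w.
  by apply/implyP; apply: src.
split=> // v; by rewrite S0 inE.
Qed.

End Topo.

Section Inv.
Variable T : finType.
Variable E : rel T.
Variable F : {set T * T}.
Hypothesis hsc : semicomplete E.
Variable X : {set T}.

Definition BF := [set a : T * T | [&& E a.1 a.2, a.1 \in ~: X & a.2 \in X]]
   :|: [set (q.2, q.1) | q in F].

Definition Sset (s : seq T) := [set p : T * T |
   [&& p.1 \in s, p.2 \in s, p.1 \notin X, p.2 \in X & p \in BF]].

Lemma inv_le s : uniq s -> topo (remove_arcs E F) s -> ninv X s <= #|Sset s|.
Proof.
elim: s => [|u s IH] //= /andP [us us'] /andP [hall ht].
have sub1 : Sset s \subset Sset (u :: s).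
  apply/subsetP => p; rewrite !inE => /and5P [-> -> -> -> ->]; by rewrite !orbT.
case uX: (u \in X).
  rewrite addn0; apply: leq_trans (IH us' ht) _; exact: subset_leq_card.
pose Xs := [set x | (x \in s) && (x \in X)].
pose I := [set (u, x) | x in Xs].
have cI : #|I| = count (mem X) s.
  rewrite card_imset; last by move=> a b [].
  rewrite -size_filter -(card_uniqP _); last exact: filter_uniq.
  by apply: eq_card => x; rewrite !inE mem_filter andbC.
have disj : Sset s :&: I = set0.
  apply/setP => p; rewrite !inE; apply/negbTE/negP => /andP [/and5P [h1 _ _ _ _]].
  move/imsetP => [x _ ep]; by rewrite ep /= (negbTE us) in h1.
have sub2 : Sset s :|: I \subset Sset (u :: s).
  rewrite subUset sub1 /=; apply/subsetP => p /imsetP [x]; rewrite inE => /andP [xs xX] ->.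
  rewrite !inE /= eqxx xs orbT uX xX /=.
  have nux : u != x by apply/eqP => e; rewrite e xX in uX.
  have [_ hc] := hsc; have := hc u x nux.
  case eux: (E u x) => /= exu; first by [].
  have := allP hall x xs; rewrite /remove_arcs exu /= negbK => xuF.
  apply/imsetP; by exists (x, u).
have := subset_leq_card sub2; rewrite cardsU disj cards0 subn0 cI.
by apply: leq_trans; rewrite leq_add2r; exact: IH.
Qed.

Lemma Sset_le s k : back_arcs E X (~: X) <= k -> #|F| <= k -> #|Sset s| <= 2 * k.
Proof.
move=> hb hF.
have : #|Sset s| <= #|BF|.
  apply: subset_leq_card; apply/subsetP => p; rewrite inE => /and5P [_ _ _ _ ->]; done.
have : #|BF| <= back_arcs E X (~: X) + #|F|.
  rewrite /BF; apply: leq_trans (leq_card_setU _ _) _; apply: leq_add.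
    rewrite /back_arcs; apply: subset_leq_card; apply/subsetP => p; rewrite !inE.
    by case/and3P => -> -> ->; rewrite andbT.
  exact: leq_imset_card.
lia.
Qed.

End Inv.

Lemma sum_trunc (g : nat -> nat) L N : (forall i, L <= i -> g i = 0) -> L <= N ->
  \sum_(i < N) g i = \sum_(i < L) g i.
Proof.
move=> h LN; rewrite -(subnKC LN) big_split_ord /= [X in _ + X]big1 ?addn0 // => i _.
by apply: h; rewrite leq_addr.
Qed.

Lemma count_card (T : finType) (s : seq T) (X : {set T}) :
  uniq s -> (forall v, v \in s) -> count (mem X) s = #|X|.
Proof.
move=> us ms; rewrite -size_filter -(card_uniqP _); last exact: filter_uniq.
by apply: eq_card => x; rewrite mem_filter ms andbT.
Qed.

Theorem count_kcuts (T : finType) (E : rel T) (k : nat)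
  (hsc : semicomplete E)
  (hfas : exists F : {set T * T}, feedback_arc_set E F /\ #|F| <= k) :
  #|kcuts E k| <= #|T|.+1 * (2 * k).+1 * npartitions (2 * k).
Proof.
case: hfas => F [[_ acy] hF].
set n := #|T|; set M := 2 * k.
pose s := tsort (remove_arcs E F) n setT.
have [us ts ms0] := tsortP acy (S := setT) (max_card _).
rewrite -/s in us ts ms0.
have ms : forall v, v \in s by move=> v; rewrite ms0 inE.
pose m X := ninv X s.
have mle : forall X, X \in kcuts E k -> m X <= M.
  move=> X; rewrite inE => hb; apply: leq_trans (inv_le hsc X us ts) _.
  exact: Sset_le.
have cX : forall X : {set T}, count (mem X) s = #|X| by move=> X; apply: count_card.
have termle : forall X i, i * G X s i <= m X.
  move=> X i; case: (leqP i (count (mem X) s)) => c; last by rewrite G_bound // muln0.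
  rewrite /m -(@G_wsum _ X s (count (mem X) s).+1 us) //.
  have c' : i < (count (mem X) s).+1 by [].
  by rewrite (bigD1 (Ordinal c')) //= leq_addr.
have Gz : forall X i, m X < i -> G X s i = 0.
  move=> X i lt; have := termle X i; case: (G X s i) => // g; nia.
have wsumN : forall X N, m X < N -> \sum_(i < N) i * G X s i = m X.
  move=> X N lt; case: (ltnP (count (mem X) s) N) => c; first exact: G_wsum.
  rewrite -(@sum_trunc (fun i => i * G X s i) N (count (mem X) s).+1) //.
  - exact: G_wsum.
  - by move=> i Ni; rewrite Gz ?muln0 //; lia.
  - lia.
pose r X (i : nat) := if i == 0 then 0 else G X s i + (i == 1) * (M - m X).
have rle : forall X, X \in kcuts E k -> forall i, r X i <= M.
  move=> X hX i; have := mle X hX; rewrite /r; case: eqP => // i0.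
  case: eqP => [->|i1]; first by have := termle X 1; lia.
  move=> mh; have h := termle X i; rewrite /= addn0; apply: leq_trans mh.
  apply: leq_trans h; rewrite leq_pmull //; lia.
have rsum : forall X, X \in kcuts E k -> \sum_(i < M.+1) i * r X i = M.
  move=> X hX.
  have e : forall i : 'I_M.+1, i * r X i = i * G X s i + (i * (1 == i)) * (M - m X).
    move=> i; rewrite /r; case: eqP => [->|_] //; rewrite mulnDr mulnA (eq_sym 1%N) //.
  rewrite (eq_bigr _ (fun i _ => e i)) big_split /= wsumN; last by have := mle X hX; lia.
  rewrite -big_distrl /= sum_eq1w; have := mle X hX; case: (M) => [|M'] /=; lia.
pose key (X : {set T}) : 'I_n.+1 * 'I_M.+1 * {ffun 'I_M.+1 -> 'I_M.+1} :=
  (inord #|X|, inord (m X), [ffun i : 'I_M.+1 => inord (r X i)]).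
pose P := [set f : {ffun 'I_M.+1 -> 'I_M.+1} |
      (nat_of_ord (f ord0) == 0) && (\sum_(i < M.+1) i * f i == M)].
have keyP : forall X, X \in kcuts E k -> key X \in setX [set: 'I_n.+1 * 'I_M.+1] P.
  move=> X hX; rewrite !inE /=; apply/andP; split.
    by rewrite ffunE inordK.
  apply/eqP; apply: etrans (rsum X hX); apply: eq_bigr => i _.
  by rewrite ffunE inordK // ltnS rle.
have keyI : {in kcuts E k &, injective key}.
  move=> X Y hX hY [e1 e2 e3].
  have cXY : #|X| = #|Y|.
    by move: e1 => /(congr1 (@nat_of_ord _)); rewrite !inordK // ltnS max_card.
  have mXY : m X = m Y.
    by move: e2 => /(congr1 (@nat_of_ord _)); rewrite !inordK // ltnS ?mle.
  have Gpos : forall i, 0 < i -> G X s i = G Y s i.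
    move=> i i0; case: (leqP i M) => iM; last by rewrite !Gz //; [rewrite -mXY|]; 
      apply: leq_trans iM; apply: mle.
    have iM' : i < M.+1 by [].
    have := congr1 (fun f : {ffun 'I_M.+1 -> 'I_M.+1} => nat_of_ord (f (Ordinal iM'))) e3.
    rewrite /= !ffunE !inordK ?ltnS ?rle //.
    rewrite /r /= mXY; case: eqP => [i00|_]; first by rewrite i00 in i0.
    by move/addIn.
  have G0 : G X s 0 = G Y s 0.
    have hs : forall Z : {set T}, \sum_(i < n.+1) G Z s i = size s - #|Z|.
      move=> Z; rewrite G_sum //; last by rewrite cX ltnS max_card.
      by rewrite -(count_predC (mem Z) s) cX; lia.
    have := hs X; have := hs Y; rewrite !big_ord_recl cXY => <-.
    rewrite (eq_bigr _ (fun i _ => Gpos (lift ord0 i) (ltn0Sn _))).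
    move=> h; apply/eqP; rewrite -(eqn_add2r (\sum_(i < n) G Y s (lift ord0 i))); apply/eqP; exact: h.
  have GXY : forall i, G X s i = G Y s i by case=> [|i] //; apply: Gpos.
  apply/setP => v; apply: (G_inj us) => //; by rewrite !cX.
rewrite -(card_in_imset keyI).
apply: leq_trans (subset_leq_card (_ : key @: kcuts E k \subset _)) _.
  by apply/subsetP => z /imsetP [X hX ->]; apply: keyP.
by rewrite cardsX cardsT card_prod !card_ord.
Qed.

Unset Implicit Arguments.
Theorem mainTheorem9 (A : R)
  (hA : forall m : nat,
     (INR (npartitions m) <= A / INR (m + 1) * exp (Cconst * sqrt (INR m)))%R)
  (T : finType) (E : rel T) (k : nat)
  (hsc : semicomplete E)
  (hfas : exists F : {set T * T}, feedback_arc_set E F /\ #|F| <= k) :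
  (INR #|kcuts E k| <= A * exp (Cconst * sqrt (2 * INR k)) * INR (#|T| + 1))%R.
Proof.
have h := count_kcuts hsc hfas.
have h1 := le_INR _ _ (elimT leP h).
apply: Rle_trans h1 _.
rewrite -!multE !mult_INR.
have e2 : INR (Nat.mul 2 k) = (2 * INR k)%R by rewrite mult_INR; simpl; ring.
have hM := hA (2 * k).
rewrite -multE e2 addn1 in hM.
rewrite addn1.
set e := exp _ in hM |- *.
set p := INR (npartitions _) in hM |- *.
set q := INR (Nat.mul 2 k).+1 in hM |- *.
set a := INR (#|T|.+1).
have pos : (0 < q)%R by apply: lt_0_INR; apply/ltP.
have pa : (0 <= a)%R by apply: pos_INR.
have hh : (q * p <= A * e)%R.
  apply: Rle_trans (Rmult_le_compat_l _ _ _ (Rlt_le _ _ pos) hM) _.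
  right; field; lra.
rewrite Rmult_assoc (Rmult_comm (A * e)).
by apply: Rmult_le_compat_l.
Qed.
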